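(* Let $\mathrm{Aut}(K_{C^3(m)^*})$ be the group of permutations of $\{1,\ldots,m\}$ preserving the simplicial complex $K_{C^3(m)^*}$. If $m>5$, this group is generated by $\sigma\colon i\mapsto m+1-i$ and the transposition $\tau=(1\ m)$. If $m=5$, it is generated by the permutation $1\mapsto3,\,2\mapsto4,\,3\mapsto5,\,4\mapsto2,\,5\mapsto1$ and the transposition $(1\ 5)$.
   Context: For a simple polytope $P$ with facets $F_1,\ldots,F_m$, $K_P$ is the simplicial complex on $\{1,\ldots,m\}$ with $\{i_1,\ldots,i_k\}\in K_P$ iff $F_{i_1}\cap\cdots\cap F_{i_k}\neq\emptyset$. $C^3(m)^*$ is the dual of the cyclic $3$-polytope with $m$ vertices, with facets labeled so that the maximal faces of $K_{C^3(m)^*}$ are exactly $\{1,i,i+1\}$ for $i=2,\ldots,m-1$ and $\{i,i+1,m\}$ for $i=1,\ldots,m-2$. *)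

(* Defs.v *)
From mathcomp Require Import all_boot all_fingroup.


(* Vertices/facets {1,...,m} are represented by 'I_m: the element x : 'I_m
   stands for the label x.+1 (so labels run over 1..m). *)

Definition maxfaces (m : nat) : seq (seq nat) :=
  [seq [:: 1; i; i.+1] | i <- iota 2 (m - 2)] ++
  [seq [:: i; i.+1; m] | i <- iota 1 (m - 2)].

Definition inK (m : nat) (A : {set 'I_m}) : bool :=
  has (fun F => [forall x in A, (val x).+1 \in F]) (maxfaces m).

Definition AutK (m : nat) : {set {perm 'I_m}} :=
  [set s : {perm 'I_m} | [forall A : {set 'I_m}, inK m (s @: A) == inK m A]].

Definition perm_of_lab (m : nat) (f : nat -> nat) : {set {perm 'I_m}} :=
  [set s : {perm 'I_m} | [forall x : 'I_m, (s x).+1 == f x.+1]].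

Definition sigma_lab (m : nat) (i : nat) : nat := m.+1 - i.
Definition tau_lab (m : nat) (i : nat) : nat :=
  if i == 1 then m else if i == m then 1 else i.
Definition rho5_lab (i : nat) : nat :=
  match i with 1 => 3 | 2 => 4 | 3 => 5 | 4 => 2 | 5 => 1 | _ => i end.

(* Main.v *)
Require Import Defs.
From mathcomp Require Import all_boot all_fingroup zify.

Definition adj0 (m a b : nat) : bool :=
  (a != b) && [|| a == 0, b == 0, a == m.-1, b == m.-1, a == b.+1 | b == a.+1].

Lemma face1 m (A : {set 'I_m}) i : 2 <= i <= m.-1 ->
  (forall z, z \in A -> (z : nat).+1 \in [:: 1; i; i.+1]) -> inK m A.
Proof.
move=> Hi HA; apply/hasP; exists [:: 1; i; i.+1].
  rewrite mem_cat; apply/orP; left; apply/mapP; exists i => //.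
  rewrite mem_iota; lia.
by apply/forallP => z; apply/implyP => /HA.
Qed.

Lemma face2 m (A : {set 'I_m}) i : 1 <= i <= m - 2 ->
  (forall z, z \in A -> (z : nat).+1 \in [:: i; i.+1; m]) -> inK m A.
Proof.
move=> Hi HA; apply/hasP; exists [:: i; i.+1; m].
  rewrite mem_cat; apply/orP; right; apply/mapP; exists i => //.
  rewrite mem_iota; lia.
by apply/forallP => z; apply/implyP => /HA.
Qed.

Lemma inK_elim m (A : {set 'I_m}) : inK m A ->
  (exists2 i, 2 <= i <= m.-1 & forall z, z \in A -> (z : nat).+1 \in [:: 1; i; i.+1]) \/
  (exists2 i, 1 <= i <= m - 2 & forall z, z \in A -> (z : nat).+1 \in [:: i; i.+1; m]).
Proof.
move/hasP => [F]; rewrite mem_cat => /orP[] /mapP [i]; rewrite mem_iota => Hi -> /forallP H.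
  by left; exists i; [lia | move=> z Hz; have := H z; rewrite Hz].
by right; exists i; [lia | move=> z Hz; have := H z; rewrite Hz].
Qed.

Lemma inK2 m (x y : 'I_m) : 2 < m -> x != y -> inK m [set x; y] = adj0 m x y.
Proof.
move=> Hm Hxy; have Hv : (x : nat) != y by []; have Hx := ltn_ord x; have Hy := ltn_ord y.
apply/idP/idP.
  case/inK_elim => [] [i Hi H]; have := H x; have := H y; rewrite !inE !eqxx ?orbT => /(_ isT) + /(_ isT);
    rewrite /adj0 ?inE; move: Hv; lia.
rewrite /adj0 => /andP[_ H].
have P : forall z, z \in [set x; y] -> z = x \/ z = y.
  by move=> z; rewrite !inE => /orP[/eqP|/eqP]; auto.
case/or4P: H => [H|H|H|/orP[H|/orP[H|H]]].
- case: (ltnP y.+1 m) => Hy1.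
    apply: (@face1 _ _ (y.+1)); first lia.
    by move=> z /P[]->; rewrite !inE; lia.
  apply: (@face2 _ _ (1)); first lia.
  by move=> z /P[]->; rewrite !inE; lia.
- case: (ltnP x.+1 m) => Hx1.
    apply: (@face1 _ _ (x.+1)); first lia.
    by move=> z /P[]->; rewrite !inE; lia.
  apply: (@face2 _ _ (1)); first lia.
  by move=> z /P[]->; rewrite !inE; lia.
- case: (ltnP y.+2 m) => Hy1.
    apply: (@face2 _ _ (y.+1)); first lia.
    by move=> z /P[]->; rewrite !inE; lia.
  apply: (@face1 _ _ (m.-1)); first lia.
  by move=> z /P[]->; rewrite !inE; lia.
- case: (ltnP x.+2 m) => Hx1.
    apply: (@face2 _ _ (x.+1)); first lia.
    by move=> z /P[]->; rewrite !inE; lia.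
  apply: (@face1 _ _ (m.-1)); first lia.
  by move=> z /P[]->; rewrite !inE; lia.
- case: (ltnP 0 y) => Hy0.
    apply: (@face1 _ _ (y.+1)); first lia.
    by move=> z /P[]->; rewrite !inE; lia.
  apply: (@face2 _ _ (1)); first lia.
  by move=> z /P[]->; rewrite !inE; lia.
- case: (ltnP 0 x) => Hx0.
    apply: (@face1 _ _ (x.+1)); first lia.
    by move=> z /P[]->; rewrite !inE; lia.
  apply: (@face2 _ _ (1)); first lia.
  by move=> z /P[]->; rewrite !inE; lia.
Qed.

Lemma imset_perm_inj m (s : {perm 'I_m}) : injective (fun A : {set 'I_m} => s @: A).
Proof.
move=> A B /= E; have := congr1 (fun X : {set 'I_m} => (s^-1)%g @: X) E => /=.
rewrite -!imset_comp !(eq_imset _ (fun x => permK s x)) !imset_id.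
by [].
Qed.

Lemma AutK_fwd m (s : {perm 'I_m}) :
  (forall A, inK m A -> inK m (s @: A)) -> s \in AutK m.
Proof.
move=> H; rewrite inE; apply/forallP => A; apply/eqP.
set S := [set B : {set 'I_m} | inK m B].
set f := fun X : {set 'I_m} => s @: X.
have sub : f @: S \subset S.
  by apply/subsetP => X /imsetP [B]; rewrite !inE => HB ->; exact: H.
have eqS : f @: S = S.
  apply/eqP; rewrite eqEcard sub /= card_imset //; exact: imset_perm_inj.
apply/idP/idP; last exact: H.
move=> HA; have : s @: A \in S by rewrite inE.
rewrite -eqS => /imsetP [B]; rewrite inE => HB /imset_perm_inj ->.
by [].
Qed.

Lemma AutK_group m : group_set (AutK m).
Proof.
apply/andP; split.
  rewrite inE; apply/forallP => A.
  by rewrite (eq_imset _ (fun x => perm1 x)) imset_id.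
apply/subsetP => _ /mulsgP [a b Ha Hb ->].
move: Ha Hb; rewrite !inE => /forallP Ha /forallP Hb; apply/forallP => A.
rewrite (eq_imset _ (fun x => permM a b x)).
have -> : [set b (a x) | x in A] = b @: (a @: A) by rewrite -imset_comp.
by rewrite (eqP (Hb _)) (eqP (Ha _)).
Qed.

Lemma mf1 m i : 2 <= i <= m.-1 -> [:: 1; i; i.+1] \in maxfaces m.
Proof. move=> Hi; rewrite mem_cat; apply/orP; left; apply/mapP; exists i => //; rewrite mem_iota; lia. Qed.
Lemma mf2 m i : 1 <= i <= m - 2 -> [:: i; i.+1; m] \in maxfaces m.
Proof. move=> Hi; rewrite mem_cat; apply/orP; right; apply/mapP; exists i => //; rewrite mem_iota; lia. Qed.

Lemma mf_elim m F : F \in maxfaces m ->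
  (exists2 i, 2 <= i <= m.-1 & F = [:: 1; i; i.+1]) \/
  (exists2 i, 1 <= i <= m - 2 & F = [:: i; i.+1; m]).
Proof.
rewrite mem_cat => /orP[] /mapP [i]; rewrite mem_iota => Hi ->.
  by left; exists i => //; lia.
by right; exists i => //; lia.
Qed.

Lemma AutK_face m (s : {perm 'I_m}) (f : nat -> nat) :
  (forall x : 'I_m, (s x).+1 = f x.+1) ->
  (forall F, F \in maxfaces m -> exists2 F', F' \in maxfaces m & forall a, a \in F -> f a \in F') ->
  s \in AutK m.
Proof.
move=> Hs HF; apply: AutK_fwd => A /hasP [F /HF [F' HF' H] /forallP HA].
apply/hasP; exists F' => //; apply/forallP => y; apply/implyP => /imsetP [x Hx ->].
by rewrite Hs; apply: H; have := HA x; rewrite Hx.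
Qed.

Lemma sigma_faces m : 2 < m -> forall F, F \in maxfaces m ->
  exists2 F', F' \in maxfaces m & forall a, a \in F -> sigma_lab m a \in F'.
Proof.
move=> Hm F /mf_elim [] [i Hi ->].
  exists [:: m - i; (m - i).+1; m]; first by apply: mf2; lia.
  by move=> a; rewrite /sigma_lab !inE; lia.
exists [:: 1; m - i; (m - i).+1]; first by apply: mf1; lia.
by move=> a; rewrite /sigma_lab !inE; lia.
Qed.

Lemma tau_faces m : 2 < m -> forall F, F \in maxfaces m ->
  exists2 F', F' \in maxfaces m & forall a, a \in F -> tau_lab m a \in F'.
Proof.
move=> Hm F /mf_elim [] [i Hi ->].
  case: (ltnP i m.-1) => Hi2.
    exists [:: i; i.+1; m]; first by apply: mf2; lia.
    by move=> a; rewrite /tau_lab; case: ifP => H1; [|case: ifP => H2]; rewrite !inE; lia.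
  exists [:: 1; i; i.+1]; first by apply: mf1; lia.
  by move=> a; rewrite /tau_lab; case: ifP => H1; [|case: ifP => H2]; rewrite !inE; lia.
case: (ltnP 1 i) => Hi2.
  exists [:: 1; i; i.+1]; first by apply: mf1; lia.
  by move=> a; rewrite /tau_lab; case: ifP => H1; [|case: ifP => H2]; rewrite !inE; lia.
exists [:: i; i.+1; m]; first by apply: mf2; lia.
by move=> a; rewrite /tau_lab; case: ifP => H1; [|case: ifP => H2]; rewrite !inE; lia.
Qed.

Lemma rho_faces F : F \in maxfaces 5 ->
  exists2 F', F' \in maxfaces 5 & forall a, a \in F -> rho5_lab a \in F'.
Proof.
move=> HF.
have : F \in [:: [::1;2;3]; [::1;3;4]; [::1;4;5]; [::1;2;5]; [::2;3;5]; [::3;4;5]] by exact: HF.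
rewrite !inE => /orP[|/orP[|/orP[|/orP[|/orP[]]]]] /eqP ->;
 first [(exists [::1;2;3]; [by [] | by move=> a; rewrite !inE => /orP[|/orP[]] /eqP ->]) | (exists [::1;3;4]; [by [] | by move=> a; rewrite !inE => /orP[|/orP[]] /eqP ->]) | (exists [::1;4;5]; [by [] | by move=> a; rewrite !inE => /orP[|/orP[]] /eqP ->]) | (exists [::1;2;5]; [by [] | by move=> a; rewrite !inE => /orP[|/orP[]] /eqP ->]) | (exists [::2;3;5]; [by [] | by move=> a; rewrite !inE => /orP[|/orP[]] /eqP ->]) | (exists [::3;4;5]; [by [] | by move=> a; rewrite !inE => /orP[|/orP[]] /eqP ->])].
Qed.

Lemma path_id m (f : nat -> nat) :
  (forall a, 1 <= a <= m - 2 -> 1 <= f a <= m - 2) ->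
  (forall a b, 1 <= a <= m - 2 -> 1 <= b <= m - 2 -> f a = f b -> a = b) ->
  (forall a b, 1 <= a <= m - 2 -> 1 <= b <= m - 2 -> a = b.+1 -> (f a == (f b).+1) || (f b == (f a).+1)) ->
  f 1 = 1 -> forall a, 1 <= a <= m - 2 -> f a = a.
Proof.
move=> P1 P2 P3 f1.
suff H : forall n a, 1 <= a <= n.+1 -> a <= m - 2 -> f a = a.
  by move=> a Ha; apply: (H a); lia.
elim=> [|n IH] a Ha Ham; first by have -> : a = 1 by lia.
case: (ltnP a n.+2) => Han; first by apply: IH; lia.
have -> : a = n.+2 by lia.
have Hn1 : f n.+1 = n.+1 by apply: IH; lia.
have := P3 n.+2 n.+1 ltac:(lia) ltac:(lia) erefl; rewrite Hn1.
have := P1 n.+2 ltac:(lia).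
case: n IH Ha Ham Han Hn1 => [|n] IH Ha Ham Han Hn1; first by lia.
have Hn : f n.+1 = n.+1 by apply: IH; lia.
have := P2 n.+3 n.+1 ltac:(lia) ltac:(lia).
lia.
Qed.

Section Main.
Variables (m : nat) (f : nat -> nat).
Hypothesis H1 : forall a, a < m -> f a < m.
Hypothesis H2 : forall a b, a < m -> b < m -> f a = f b -> a = b.
Hypothesis H3 : forall c, c < m -> exists2 a, a < m & f a = c.
Hypothesis H4 : forall a b, a < m -> b < m -> adj0 m (f a) (f b) = adj0 m a b.

Definition univ u := forall b, b < m -> b <> u -> adj0 m u b.

Lemma univ_f u : u < m -> univ u -> univ (f u).
Proof.
move=> Hu Hun b Hb Hbu; have [a Ha Hfa] := H3 b Hb.
rewrite -Hfa H4 //; apply: Hun => // E; apply: Hbu; by rewrite -Hfa E.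
Qed.

Lemma univ_big c : 5 < m -> c < m -> univ c -> c = 0 \/ c = m.-1.
Proof.
move=> Hm Hc Hu; case: (ltnP 0 c) => Hc0; last by left; lia.
case: (ltnP c m.-1) => Hc1; last by right; lia.
have := Hu (if 2 < c then 1 else m.-2); case: ifP => H; rewrite /adj0 => /(_ ltac:(lia) ltac:(lia)); lia.
Qed.

Lemma univ5 c : m = 5 -> c < m -> univ c -> [|| c == 0, c == 2 | c == 4].
Proof.
move=> Hm Hc Hu; move: Hc Hu; rewrite /univ Hm => Hc Hu.
case: c Hc Hu => [|[|[|[|[|c]]]]] // _ Hu.
  by have := Hu 3 isT ltac:(lia).
by have := Hu 1 isT ltac:(lia).
Qed.

Definition S0 (e : bool) a := if e then m.-1 - a else a.
Definition T0 (e : bool) a := if e then (if a == 0 then m.-1 else if a == m.-1 then 0 else a) else a.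

Lemma main_big : 5 < m -> exists e1 e2, forall a, a < m -> f a = T0 e1 (S0 e2 a).
Proof.
move=> Hm.
have U0 : univ 0 by move=> b Hb Hb0; rewrite /adj0; lia.
have Um : univ m.-1 by move=> b Hb Hb0; rewrite /adj0; lia.
have F0 := univ_big (f (0)) Hm (H1 0 ltac:(lia)) (univ_f 0 ltac:(lia) U0).
have Fm := univ_big (f (m.-1)) Hm (H1 m.-1 ltac:(lia)) (univ_f m.-1 ltac:(lia) Um).
have D0m : f 0 <> f m.-1 by move/H2; lia.
have Int : forall a, 1 <= a <= m - 2 -> 1 <= f a <= m - 2.
  move=> a Ha; have := H1 a ltac:(lia).
  have : f a <> f 0 by move/H2; lia.
  have : f a <> f m.-1 by move/H2; lia.
  lia.
have Inj : forall a b, 1 <= a <= m - 2 -> 1 <= b <= m - 2 -> f a = f b -> a = b.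
  move=> a b Ha Hb; apply: H2; lia.
have Adj : forall a b, 1 <= a <= m - 2 -> 1 <= b <= m - 2 -> a = b.+1 -> (f a == (f b).+1) || (f b == (f a).+1).
  move=> a b Ha Hb Hab; have := H4 a b ltac:(lia) ltac:(lia).
  have := Int a Ha; have := Int b Hb; rewrite /adj0; lia.
have F1 : f 1 = 1 \/ f 1 = m - 2.
  have := Int 1 ltac:(lia).
  case: (ltnP (f 1) 2) => A; first by left; lia.
  case: (ltnP (f 1) (m - 2)) => B; last by right; lia.
  have [a Ha Hfa] := H3 (f 1).-1 ltac:(lia).
  have [b Hb Hfb] := H3 (f 1).+1 ltac:(lia).
  have Ea := H4 a 1 Ha ltac:(lia).
  have Eb := H4 b 1 Hb ltac:(lia).
  have Na0 : a <> 0 by move=> E; move: Hfa; rewrite E; lia.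
  have Nb0 : b <> 0 by move=> E; move: Hfb; rewrite E; lia.
  have Nam : a <> m.-1 by move=> E; move: Hfa; rewrite E; lia.
  have Nbm : b <> m.-1 by move=> E; move: Hfb; rewrite E; lia.
  have Ta : adj0 m a 1 by rewrite -Ea Hfa /adj0; lia.
  have Tb : adj0 m b 1 by rewrite -Eb Hfb /adj0; lia.
  have Ea2 : a = 2 by move: Ta; rewrite /adj0; lia.
  have Eb2 : b = 2 by move: Tb; rewrite /adj0; lia.
  move: Hfa Hfb; rewrite Ea2 Eb2; lia.
case: F1 => F1.
- have Id := @path_id m f Int Inj Adj F1.
  exists (f 0 != 0), false => a Ha /=.
  case: (ltnP 0 a) => A; last by (have -> : a = 0 by lia); rewrite /T0 /S0; repeat (case: ifP => ?); lia.
  case: (ltnP a m.-1) => B; last by (have -> : a = m.-1 by lia); rewrite /T0 /S0; repeat (case: ifP => ?); lia.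
  rewrite Id; last lia. rewrite /T0 /S0; repeat (case: ifP => ?); lia.
- pose g a := m.-1 - f a.
  have Id : forall a, 1 <= a <= m - 2 -> g a = a.
    apply: path_id.
    + move=> a Ha; have := Int a Ha; rewrite /g; lia.
    + move=> a b Ha Hb; rewrite /g => E; apply: Inj => //; have := Int a Ha; have := Int b Hb; lia.
    + move=> a b Ha Hb Hab; have := Adj a b Ha Hb Hab; have := Int a Ha; have := Int b Hb; rewrite /g; lia.
    + rewrite /g; lia.
  exists (f 0 != m.-1), true => a Ha /=.
  case: (ltnP 0 a) => A; last by (have -> : a = 0 by lia); rewrite /T0 /S0; repeat (case: ifP => ?); lia.
  case: (ltnP a m.-1) => B; last by (have -> : a = m.-1 by lia); rewrite /T0 /S0; repeat (case: ifP => ?); lia.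
  have := Id a ltac:(lia); have := Int a ltac:(lia); rewrite /g /T0 /S0; repeat (case: ifP => ?); lia.
Qed.

Lemma L5 x y z w : [|| x == 0, x == 2 | x == 4] -> [|| y == 0, y == 2 | y == 4] ->
  [|| z == 0, z == 2 | z == 4] -> x <> y -> x <> z -> y <> z ->
  w < 5 -> w <> x -> w <> y -> w <> z -> ((w == 1) || (w == 3)) /\ z = 6 - x - y.
Proof.
case/or3P => /eqP -> ; case/or3P => /eqP -> ; case/or3P => /eqP -> // _ _ _; lia.
Qed.

Lemma main5 : m = 5 ->
  [/\ [|| f 0 == 0, f 0 == 2 | f 0 == 4], [|| f 2 == 0, f 2 == 2 | f 2 == 4],
      f 0 <> f 2, f 4 = 6 - f 0 - f 2 & (f 1 == 1) || (f 1 == 3)] /\ f 3 = 4 - f 1.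
Proof.
move=> Hm.
have U0 : univ 0 by move=> b Hb Hb0; rewrite /adj0; lia.
have U2 : univ 2 by move=> b Hb Hb0; rewrite /adj0 Hm; lia.
have U4 : univ 4 by move=> b Hb Hb0; rewrite /adj0; lia.
have F0 := univ5 (f (0)) Hm (H1 0 ltac:(lia)) (univ_f 0 ltac:(lia) U0).
have F2 := univ5 (f (2)) Hm (H1 2 ltac:(lia)) (univ_f 2 ltac:(lia) U2).
have F4 := univ5 (f (4)) Hm (H1 4 ltac:(lia)) (univ_f 4 ltac:(lia) U4).
have I : forall a b, a < m -> b < m -> a <> b -> f a <> f b.
  by move=> a b Ha Hb Hab E; apply: Hab; apply: H2.
have [A1 _] := @L5 _ _ _ _ F0 F2 F4 (I 0 2 ltac:(lia) ltac:(lia) ltac:(lia)) (I 0 4 ltac:(lia) ltac:(lia) ltac:(lia))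
  (I 2 4 ltac:(lia) ltac:(lia) ltac:(lia)) (ltac:(have := H1 1; lia) : f 1 < 5)
  (I 1 0 ltac:(lia) ltac:(lia) ltac:(lia)) (I 1 2 ltac:(lia) ltac:(lia) ltac:(lia)) (I 1 4 ltac:(lia) ltac:(lia) ltac:(lia)).
have [A3 E4] := @L5 _ _ _ _ F0 F2 F4 (I 0 2 ltac:(lia) ltac:(lia) ltac:(lia)) (I 0 4 ltac:(lia) ltac:(lia) ltac:(lia))
  (I 2 4 ltac:(lia) ltac:(lia) ltac:(lia)) (ltac:(have := H1 3; lia) : f 3 < 5)
  (I 3 0 ltac:(lia) ltac:(lia) ltac:(lia)) (I 3 2 ltac:(lia) ltac:(lia) ltac:(lia)) (I 3 4 ltac:(lia) ltac:(lia) ltac:(lia)).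
have N13 := I 1 3 ltac:(lia) ltac:(lia) ltac:(lia).
split; first split => //; first exact: I 0 2 ltac:(lia) ltac:(lia) ltac:(lia).
move: A1 A3 N13; case/orP => /eqP ->; case/orP => /eqP -> //.
Qed.
End Main.

Lemma AutK_adj n (s : {perm 'I_n.+1}) : 1 < n -> s \in AutK n.+1 ->
  forall a b, a < n.+1 -> b < n.+1 ->
  adj0 n.+1 (val (s (inord a))) (val (s (inord b))) = adj0 n.+1 a b.
Proof.
move=> Hn Hs a b Ha Hb.
have [Exy|Nxy] := eqVneq (inord a : 'I_n.+1) (inord b).
  have Eab : a = b by rewrite -(inordK Ha) -(inordK Hb) Exy.
  by rewrite Exy Eab /adj0 !eqxx.
have Nsxy : s (inord a) != s (inord b) by rewrite (inj_eq perm_inj).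
have -> : adj0 n.+1 a b = adj0 n.+1 (inord a : 'I_n.+1) (inord b : 'I_n.+1) by rewrite !inordK.
rewrite -inK2 // -inK2 //.
move: Hs; rewrite inE => /forallP /(_ [set inord a; inord b]) /eqP <-.
by rewrite imsetU1 imset_set1.
Qed.

Definition fof n (s : {perm 'I_n.+1}) := fun a => val (s (inord a)).
Arguments fof {n}.
Lemma AutK_f n (s : {perm 'I_n.+1}) :
  [/\ forall a, a < n.+1 -> fof s a < n.+1,
      forall a b, a < n.+1 -> b < n.+1 -> fof s a = fof s b -> a = b &
      forall c, c < n.+1 -> exists2 a, a < n.+1 & fof s a = c].
Proof.
set f := fof s.
split.
- by move=> a _; exact: ltn_ord.
- move=> a b Ha Hb /val_inj /perm_inj E.
  by rewrite -(inordK Ha) -(inordK Hb) E.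
- move=> c Hc; exists (val ((s^-1)%g (inord c))); first exact: ltn_ord.
  by rewrite /f /fof inord_val permKV; exact: (@inordK n c Hc).
Qed.

Lemma AutK_big n (s : {perm 'I_n.+1}) : 4 < n -> s \in AutK n.+1 ->
  exists e1 e2, forall a, a < n.+1 -> val (s (inord a)) = T0 n.+1 e1 (S0 n.+1 e2 a).
Proof.
move=> Hn Hs; have [A B C] := AutK_f _ s.
exact: (@main_big n.+1 (fof s) A B C (@AutK_adj n s ltac:(lia) Hs) ltac:(lia)).
Qed.

Lemma AutK_5' (s : {perm 'I_5}) : s \in AutK 5 ->
  [/\ [|| fof s 0 == 0, fof s 0 == 2 | fof s 0 == 4], [|| fof s 2 == 0, fof s 2 == 2 | fof s 2 == 4],
      fof s 0 <> fof s 2, fof s 4 = 6 - fof s 0 - fof s 2 & (fof s 1 == 1) || (fof s 1 == 3)] /\ fof s 3 = 4 - fof s 1.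
Proof.
move=> Hs; have [A B C] := AutK_f _ s.
exact: (@main5 5 (fof s) A B C (@AutK_adj 4 s isT Hs) erefl).
Qed.

Definition sig_p n : {perm 'I_n.+1} := perm (@rev_ord_inj n.+1).
Definition tau_p n : {perm 'I_n.+1} := tperm ord0 ord_max.

Lemma sig_pE n (x : 'I_n.+1) : val (sig_p n x) = S0 n.+1 true x.
Proof. by rewrite permE /= /S0. Qed.

Lemma tau_pE n (x : 'I_n.+1) : 0 < n -> val (tau_p n x) = T0 n.+1 true x.
Proof.
move=> Hn; rewrite /tau_p /T0 /=; case: tpermP => [->|->|/eqP H1 /eqP H2] /=.
- by [].
- by rewrite eqxx; case: n Hn {x}.
- have : val x != 0 by apply: contra H1 => /eqP E; apply/eqP/val_inj.
  have : val x != n by apply: contra H2 => /eqP E; apply/eqP/val_inj.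
  by move=> /negbTE -> /negbTE ->.
Qed.

Definition r5 (x : 'I_5) : 'I_5 :=
  match val x with
  | 0 => @Ordinal 5 2 isT | 1 => @Ordinal 5 3 isT | 2 => @Ordinal 5 4 isT
  | 3 => @Ordinal 5 1 isT | _ => @Ordinal 5 0 isT end.
Lemma r5_inj : injective r5.
Proof.
move=> x y E; apply/val_inj; move: E.
by case: x => [[|[|[|[|[|?]]]]] Hx]; case: y => [[|[|[|[|[|?]]]]] Hy] //= /(congr1 val).
Qed.
Definition rho_p : {perm 'I_5} := perm r5_inj.
Definition rho0 (a : nat) := (rho5_lab a.+1).-1.
Lemma rho_pE (x : 'I_5) : val (rho_p x) = rho0 x.
Proof. by rewrite permE; case: x => [[|[|[|[|[|?]]]]] Hx]. Qed.

Lemma ext5 (s w : {perm 'I_5}) : (forall a, a < 5 -> fof s a = fof w a) -> s = w.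
Proof.
move=> H; apply/permP => x; apply/val_inj; have := H x (ltn_ord x).
by rewrite /fof inord_val.
Qed.

Lemma sig_in n : sig_p n \in perm_of_lab n.+1 (sigma_lab n.+1).
Proof.
rewrite inE; apply/forallP => x; apply/eqP; rewrite sig_pE /S0 /sigma_lab; have := ltn_ord x; lia.
Qed.

Lemma tau_in n : 0 < n -> tau_p n \in perm_of_lab n.+1 (tau_lab n.+1).
Proof.
move=> Hn; rewrite inE; apply/forallP => x; apply/eqP; rewrite tau_pE // /T0 /tau_lab.
have := ltn_ord x; repeat (case: ifP => ?); lia.
Qed.

Lemma rho_in : rho_p \in perm_of_lab 5 rho5_lab.
Proof.
rewrite inE; apply/forallP => x; apply/eqP; rewrite rho_pE.
by case: x => [[|[|[|[|[|?]]]]] Hx].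
Qed.

Lemma vinord n a : a < n.+1 -> val (@inord n a) = a.
Proof. exact: inordK. Qed.

Definition H5 := <<perm_of_lab 5 rho5_lab :|: perm_of_lab 5 (tau_lab 5)>>%g.
Lemma inH5 s k j : (forall a, a < 5 -> fof s a = fof (rho_p ^+ k * tau_p 4 ^+ j)%g a) -> s \in H5.
Proof.
move/ext5 ->; rewrite groupM // groupX // mem_gen // inE ?rho_in ?(@tau_in 4 isT) ?orbT //.
Qed.

Lemma AutK_sub_gen m (A : {set {perm 'I_m}}) : A \subset AutK m -> <<A>>%g \subset AutK m.
Proof.
move=> HA.
have -> : AutK m = gval (Group (AutK_group m)) by [].
by rewrite gen_subG.
Qed.

Theorem lemma5p3 :
  (forall m : nat, 5 < m ->
     AutK m = <<perm_of_lab m (sigma_lab m) :|: perm_of_lab m (tau_lab m)>>%g) /\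
  AutK 5 = <<perm_of_lab 5 rho5_lab :|: perm_of_lab 5 (tau_lab 5)>>%g.
Proof.
split.
  case=> [//|n] Hn.
  apply/eqP; rewrite eqEsubset; apply/andP; split.
    apply/subsetP => s Hs; have [e1 [e2 He]] := @AutK_big n s ltac:(lia) Hs.
    have -> : s = ((if e2 then sig_p n else 1) * (if e1 then tau_p n else 1))%g.
      apply/permP => x; apply/val_inj; rewrite permM; have := He x (ltn_ord x); rewrite inord_val => ->.
      move: He => _; case: e1; case: e2; rewrite /= ?perm1 ?tau_pE ?sig_pE // /T0 /S0; try lia; repeat (case: ifP => ?); lia.
    clear He; rewrite groupM //.
      by case: e2; [apply: mem_gen; rewrite inE sig_in | exact: group1].
    by case: e1; [apply: mem_gen; rewrite inE tau_in ?orbT //; lia | exact: group1].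
  apply: AutK_sub_gen; rewrite subUset; apply/andP; split; apply/subsetP => s; rewrite inE => /forallP H.
    apply: (@AutK_face _ s (sigma_lab n.+1)); first by move=> x; exact/eqP/H.
    by apply: sigma_faces; lia.
  apply: (@AutK_face _ s (tau_lab n.+1)); first by move=> x; exact/eqP/H.
  by apply: tau_faces; lia.
apply/eqP; rewrite eqEsubset; apply/andP; split; last first.
apply: AutK_sub_gen; rewrite subUset; apply/andP; split; apply/subsetP => s; rewrite inE => /forallP H.
  apply: (@AutK_face _ s rho5_lab); first by move=> x; exact/eqP/H.
  exact: rho_faces.
apply: (@AutK_face _ s (tau_lab 5)); first by move=> x; exact/eqP/H.
by apply: tau_faces.
  apply/subsetP => s Hs; have [[A0 A2 A02 E4 A1] E3] := @AutK_5' s Hs.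
  rewrite -/H5.
  case/or3P: A0 => /eqP E0; case/or3P: A2 => /eqP E2; rewrite E0 E2 in A02 E4; try by case: A02.
  all: case/orP: A1 => /eqP E1; rewrite E1 in E3.
  all: first [ by apply: (inH5 _ 0 0); (move=> a Ha; case: a Ha => [|[|[|[|[|a]]]]] Ha //; rewrite ?E0 ?E1 ?E2 ?E3 ?E4 /fof ?expgS ?expg0 ?mulg1 ?mul1g ?permM ?perm1 ?rho_pE ?tau_pE //= ?rho_pE ?tau_pE //= ?rho_pE ?tau_pE //= ?rho_pE ?tau_pE //= ?rho_pE ?tau_pE //= ?rho_pE ?tau_pE //= ?rho_pE ?tau_pE //= ?vinord) | by apply: (inH5 _ 0 1); (move=> a Ha; case: a Ha => [|[|[|[|[|a]]]]] Ha //; rewrite ?E0 ?E1 ?E2 ?E3 ?E4 /fof ?expgS ?expg0 ?mulg1 ?mul1g ?permM ?perm1 ?rho_pE ?tau_pE //= ?rho_pE ?tau_pE //= ?rho_pE ?tau_pE //= ?rho_pE ?tau_pE //= ?rho_pE ?tau_pE //= ?rho_pE ?tau_pE //= ?rho_pE ?tau_pE //= ?vinord) | by apply: (inH5 _ 1 0); (move=> a Ha; case: a Ha => [|[|[|[|[|a]]]]] Ha //; rewrite ?E0 ?E1 ?E2 ?E3 ?E4 /fof ?expgS ?expg0 ?mulg1 ?mul1g ?permM ?perm1 ?rho_pE ?tau_pE //= ?rho_pE ?tau_pE //= ?rho_pE ?tau_pE //= ?rho_pE ?tau_pE //= ?rho_pE ?tau_pE //= ?rho_pE ?tau_pE //=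 ?rho_pE ?tau_pE //= ?vinord) | by apply: (inH5 _ 1 1); (move=> a Ha; case: a Ha => [|[|[|[|[|a]]]]] Ha //; rewrite ?E0 ?E1 ?E2 ?E3 ?E4 /fof ?expgS ?expg0 ?mulg1 ?mul1g ?permM ?perm1 ?rho_pE ?tau_pE //= ?rho_pE ?tau_pE //= ?rho_pE ?tau_pE //= ?rho_pE ?tau_pE //= ?rho_pE ?tau_pE //= ?rho_pE ?tau_pE //= ?rho_pE ?tau_pE //= ?vinord) | by apply: (inH5 _ 2 0); (move=> a Ha; case: a Ha => [|[|[|[|[|a]]]]] Ha //; rewrite ?E0 ?E1 ?E2 ?E3 ?E4 /fof ?expgS ?expg0 ?mulg1 ?mul1g ?permM ?perm1 ?rho_pE ?tau_pE //= ?rho_pE ?tau_pE //= ?rho_pE ?tau_pE //= ?rho_pE ?tau_pE //= ?rho_pE ?tau_pE //= ?rho_pE ?tau_pE //= ?rho_pE ?tau_pE //= ?vinord) | by apply: (inH5 _ 2 1); (move=> a Ha; case: a Ha => [|[|[|[|[|a]]]]] Ha //; rewrite ?E0 ?E1 ?E2 ?E3 ?E4 /fof ?expgS ?expg0 ?mulg1 ?mul1g ?permM ?perm1 ?rho_pE ?tau_pE //= ?rho_pE ?tau_pE //= ?rho_pE ?tau_pE //= ?rho_pE ?tau_pE //= ?rho_pE ?tau_pE //= ?rho_pE ?tau_pE //= ?rho_pE ?tau_pE //= ?vinord) | by apply: (inH5 _ 3 0); (move=> a Ha; case: a Ha => [|[|[|[|[|a]]]]] Ha //; rewrite ?E0 ?E1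 ?E2 ?E3 ?E4 /fof ?expgS ?expg0 ?mulg1 ?mul1g ?permM ?perm1 ?rho_pE ?tau_pE //= ?rho_pE ?tau_pE //= ?rho_pE ?tau_pE //= ?rho_pE ?tau_pE //= ?rho_pE ?tau_pE //= ?rho_pE ?tau_pE //= ?rho_pE ?tau_pE //= ?vinord) | by apply: (inH5 _ 3 1); (move=> a Ha; case: a Ha => [|[|[|[|[|a]]]]] Ha //; rewrite ?E0 ?E1 ?E2 ?E3 ?E4 /fof ?expgS ?expg0 ?mulg1 ?mul1g ?permM ?perm1 ?rho_pE ?tau_pE //= ?rho_pE ?tau_pE //= ?rho_pE ?tau_pE //= ?rho_pE ?tau_pE //= ?rho_pE ?tau_pE //= ?rho_pE ?tau_pE //= ?rho_pE ?tau_pE //= ?vinord) | by apply: (inH5 _ 4 0); (move=> a Ha; case: a Ha => [|[|[|[|[|a]]]]] Ha //; rewrite ?E0 ?E1 ?E2 ?E3 ?E4 /fof ?expgS ?expg0 ?mulg1 ?mul1g ?permM ?perm1 ?rho_pE ?tau_pE //= ?rho_pE ?tau_pE //= ?rho_pE ?tau_pE //= ?rho_pE ?tau_pE //= ?rho_pE ?tau_pE //= ?rho_pE ?tau_pE //= ?rho_pE ?tau_pE //= ?vinord) | by apply: (inH5 _ 4 1); (move=> a Ha; case: a Ha => [|[|[|[|[|a]]]]] Ha //; rewrite ?E0 ?E1 ?E2 ?E3 ?E4 /fof ?expgS ?expg0 ?mulg1 ?mul1g ?permM ?perm1 ?rho_pE ?tau_pE //= ?rho_pE ?tau_pE //= ?rho_pE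 ?tau_pE //= ?rho_pE ?tau_pE //= ?rho_pE ?tau_pE //= ?rho_pE ?tau_pE //= ?rho_pE ?tau_pE //= ?vinord) | by apply: (inH5 _ 5 0); (move=> a Ha; case: a Ha => [|[|[|[|[|a]]]]] Ha //; rewrite ?E0 ?E1 ?E2 ?E3 ?E4 /fof ?expgS ?expg0 ?mulg1 ?mul1g ?permM ?perm1 ?rho_pE ?tau_pE //= ?rho_pE ?tau_pE //= ?rho_pE ?tau_pE //= ?rho_pE ?tau_pE //= ?rho_pE ?tau_pE //= ?rho_pE ?tau_pE //= ?rho_pE ?tau_pE //= ?vinord) | by apply: (inH5 _ 5 1); (move=> a Ha; case: a Ha => [|[|[|[|[|a]]]]] Ha //; rewrite ?E0 ?E1 ?E2 ?E3 ?E4 /fof ?expgS ?expg0 ?mulg1 ?mul1g ?permM ?perm1 ?rho_pE ?tau_pE //= ?rho_pE ?tau_pE //= ?rho_pE ?tau_pE //= ?rho_pE ?tau_pE //= ?rho_pE ?tau_pE //= ?rho_pE ?tau_pE //= ?rho_pE ?tau_pE //= ?vinord) ].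
Qed.
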